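(* Let $F$ be a regular distribution with optimal monopoly price $p^{\mathsf{opt}}$, let $\varepsilon\in(0,0.1]$ and $\delta\in(0,1]$. Define $\widetilde p=p^{\mathsf{opt}}$ if $q(p^{\mathsf{opt}})\ge\varepsilon$, and otherwise let $\widetilde p$ be a price with $q(\widetilde p)=\varepsilon$. Then $\mathrm{Rev}(\widetilde p)\ge(1-\varepsilon)\,\mathrm{Rev}(p^{\mathsf{opt}})$. Furthermore, if $s\sim F$ is a single sample, then $$\Pr_{s\sim F}\Big[\frac{\delta s}{8}\le\widetilde p\le\frac{4s}{\delta\varepsilon}\Big]\ge 1-\frac{\delta}{2}.$$
   Context: $F(p)=\Pr_{v\sim F}[v<p]$, $q(p)=1-F(p)$, $\mathrm{Rev}(p)=p\,q(p)$, $p^{\mathsf{opt}}\in\arg\max_p\mathrm{Rev}(p)$. $F$ has a density $f$ and is regular if $v-\frac{1-F(v)}{f(v)}$ is nondecreasing on its support. *)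

(* Defs.v *)
From HB Require Import structures.
From mathcomp Require Import all_boot all_order all_algebra.
From mathcomp Require Import all_classical all_reals all_analysis.
Set Implicit Arguments. Unset Strict Implicit. Unset Printing Implicit Defensive.
Import Order.TTheory GRing.Theory Num.Theory.
Import numFieldNormedType.Exports.
Local Open Scope classical_set_scope.
Local Open Scope ring_scope.

Section Defs.
Variable R : realType.
Implicit Types (P : probability R R) (f : R -> R).

Definition cdf P (p : R) : R := fine (P [set v : R | v < p]).
Definition qf P (p : R) : R := 1 - cdf P p.
Definition Rev P (p : R) : R := p * qf P p.

Definition is_opt_price P (p : R) : Prop := forall p' : R, Rev P p' <= Rev P p.

Definition is_density P f : Prop :=
  [/\ forall x, 0 <= f x, measurable_fun setT f &
      forall A : set R, measurable A ->
        P A = (\int[lebesgue_measure]_(x in A) (f x)%:E)%E].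

Definition virtual_value P f (v : R) : R := v - (1 - cdf P v) / f v.

Definition regular P f : Prop :=
  exists I : set R,
    [/\ is_interval I, I `<=` [set x | 0 <= x],
        (forall x, I x -> 0 < f x), (forall x, ~ I x -> f x = 0) &
        (forall x y, I x -> I y -> x <= y ->
           virtual_value P f x <= virtual_value P f y)].
End Defs.

(* Main.v *)
Require Import Defs.
From HB Require Import structures.
From mathcomp Require Import all_boot all_order all_algebra.
From mathcomp Require Import all_classical all_reals all_analysis.
From mathcomp Require Import ring lra measurable_realfun.
Set Implicit Arguments. Unset Strict Implicit. Unset Printing Implicit Defensive.
Import Order.TTheory GRing.Theory Num.Theory.
Import numFieldNormedType.Exports.
Local Open Scope classical_set_scope.
Local Open Scope ring_scope.

Lemma absx_bnd (R : realType) (s t x : R) : s <= x -> x < t -> `|x| <= `|s| + `|t|.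
Proof.
move=> sx xt.
have a1 := ler_norm t; have a2 := ler_norm (- s); rewrite normrN in a2.
have a3 := normr_ge0 s; have a4 := normr_ge0 t.
by case: (lerP 0 x) => x0; [rewrite ger0_norm // | rewrite ltr0_norm //]; lra.
Qed.

Section S.
Variables (R : realType) (P : probability R R).
Local Notation F := (Defs.cdf P).
Local Notation q := (Defs.qf P).

Lemma mlt (p : R) : measurable [set v : R | v < p].
Proof.
rewrite (_ : [set v | v < p] = `]-oo, p[%classic); first exact: measurable_itv.
by apply/seteqP; split => x /=; rewrite in_itv/=.
Qed.

Lemma mge (p : R) : measurable [set v : R | p <= v].
Proof.
rewrite (_ : [set v | p <= v] = `[p, +oo[%classic); first exact: measurable_itv.
by apply/seteqP; split => x /=; rewrite in_itv/= andbT.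
Qed.

Lemma PltE p : P ([set v : R | v < p]) = (F p)%:E.
Proof.
rewrite /Defs.cdf fineK // fin_num_measure //; exact: mlt.
Qed.

Lemma F_ge0 p : 0 <= F p.
Proof. by rewrite -lee_fin -PltE. Qed.

Lemma F_le1 p : F p <= 1.
Proof. by rewrite -lee_fin -PltE probability_le1 //; exact: mlt. Qed.

Lemma F_nd (x y : R) : x <= y -> F x <= F y.
Proof.
move=> xy; rewrite -lee_fin -!PltE; apply: le_measure; rewrite ?inE; try exact: mlt.
by move=> v /= /lt_le_trans; apply.
Qed.

Lemma PgeE p : P ([set v : R | p <= v]) = (q p)%:E.
Proof.
have -> : [set v | p <= v] = ~` [set v | v < p].
  by apply/seteqP; split => x /=; rewrite leNgt => /negP.
rewrite probability_setC; last exact: mlt.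
by rewrite PltE /Defs.qf EFinB.
Qed.

Lemma PitvE (a b : R) : a <= b -> P ([set v : R | a <= v < b]) = (F b - F a)%:E.
Proof.
move=> ab.
have -> : [set v : R | a <= v < b] = [set v : R | v < b] `\` [set v : R | v < a].
  apply/seteqP; split => x /=.
    by case/andP => ax xb; split => //; apply/negP; rewrite -leNgt.
  by case => xb /negP; rewrite -leNgt => ->.
rewrite measureD; [|exact: mlt|exact: mlt|]; last first.
  by apply: (@le_lt_trans _ _ 1%E); [exact: probability_le1 (mlt b)|exact: ltry].
have -> : [set v : R | v < b] `&` [set v : R | v < a] = [set v : R | v < a].
  apply/seteqP; split => x /=; first by case.
  by move=> xa; split => //; exact: lt_le_trans xa ab.
by rewrite EFinB -(PltE a) -(PltE b).
Qed.

Variable f : R -> R.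
Hypothesis hd : is_density P f.
Local Notation L := (@lebesgue_measure R).

Lemma f_ge0 x : 0 <= f x.
Proof. by case: hd. Qed.

Lemma mf : measurable_fun setT f.
Proof. by case: hd. Qed.

Lemma itvE (a b : R) : `[a, b[%classic = [set v : R | a <= v < b].
Proof. by apply/seteqP; split => x /=; rewrite in_itv. Qed.

Lemma int_itv (a b : R) : a <= b ->
  (\int[L]_(x in `[a, b[) (f x)%:E)%E = (F b - F a)%:E.
Proof.
move=> ab; case: hd => _ _ /(_ _ (measurable_itv `[a, b[)) <-.
by rewrite itvE PitvE.
Qed.

Lemma key (s t : R) : s <= t ->
  (\int[L]_(u in `[s, t[) (F t - F u)%:E =
   \int[L]_(v in `[s, t[) ((v - s) * f v)%:E)%E.
Proof.
move=> st.
pose h (z : R * R) := (z.1 \in `[s, t[) && (z.2 \in `[s, t[) && (z.1 <= z.2).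
pose g (z : R * R) := (if h z then f z.2 else 0)%:E.
have mh : measurable_fun setT h.
  have mi (k : R * R -> R) : measurable_fun setT k -> measurable_fun setT (fun z => k z \in `[s, t[).
    move=> mk; rewrite /=; under eq_fun do rewrite in_itv/=.
    apply: measurable_and; first exact: measurable_fun_ler.
    exact: measurable_fun_ltr.
  apply: measurable_and; first apply: measurable_and.
  - exact: mi measurable_fst.
  - exact: mi measurable_snd.
  - exact: measurable_fun_ler measurable_fst measurable_snd.
have mg : measurable_fun setT g.
  apply/measurable_EFinP; apply: measurable_fun_ifT => //.
  exact: measurableT_comp mf measurable_snd.
have g0 z : (0 <= g z)%E by rewrite /g lee_fin; case: ifP => // _; exact: f_ge0.
have E1 u : (\int[L]_y g (u, y))%E = (if u \in `[s, t[ then F t - F u else 0)%:E.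
  case: (boolP (u \in `[s, t[)) => uI.
    rewrite -int_itv; last by move: uI; rewrite in_itv/= => /andP[_ /ltW].
    rewrite [RHS]integral_mkcond; apply: eq_integral => y _.
    rewrite /g /h /= uI patchE /=.
    have -> : (y \in `[s, t[) && (u <= y) = (y \in `[u, t[).
      move: uI; rewrite !in_itv /= => /andP[su ut].
      apply/idP/idP.
        by case/andP => /andP[_ ->] ->.
      by case/andP => uy ->; rewrite uy (le_trans su uy).
    by rewrite mem_setE; case: ifP.
  by apply: integral0_eq => y _; rewrite /g /h /= (negbTE uI).
have E2 v : (\int[L]_x g (x, v))%E = (if v \in `[s, t[ then (v - s) * f v else 0)%:E.
  case: (boolP (v \in `[s, t[)) => vI.
    transitivity (\int[L]_(x in `[s, v]) (cst (f v)%:E) x)%E.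
      rewrite [RHS]integral_mkcond; apply: eq_integral => x _.
      rewrite /g /h /= vI patchE /= andbT.
      have -> : (x \in `[s, t[) && (x <= v) = (x \in `[s, v]).
        move: vI; rewrite !in_itv /= => /andP[sv vt].
        apply/idP/idP.
          by case/andP => /andP[-> _] ->.
        by case/andP => -> xv; rewrite xv (le_lt_trans xv vt).
      by rewrite mem_setE; case: ifP.
    rewrite integral_cst; last exact: measurable_itv.
    have := lebesgue_measure_itv `[s, v]; rewrite /= lte_fin => ->.
    case: ltP => sv; first by rewrite -EFinB -EFinM mulrC.
    move: vI; rewrite in_itv /= => /andP[vs _].
    have -> : v = s by apply/eqP; rewrite eq_le vs sv.
    by rewrite subrr mul0r mule0.
  by apply: integral0_eq => x _; rewrite /g /h /= (negbTE vI) andbF.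
transitivity (\int[L]_u (\int[L]_y g (u, y)))%E.
  rewrite integral_mkcond; apply: eq_integral => u _.
  by rewrite E1 patchE mem_setE; case: ifP.
have FT := @fubini_tonelli _ _ _ _ R L L g mg g0.
apply: etrans; first exact: FT.
rewrite [RHS]integral_mkcond; apply: eq_integral => v _.
by rewrite E2 patchE mem_setE; case: ifP.
Qed.

Lemma bnd (h : R -> R) (D : set R) (B : R) :
  (forall x, D x -> `|h x| <= B) -> [bounded h x | x in D].
Proof.
move=> hB; exists B; split; first exact: num_real.
by move=> M BM x Dx /=; apply: le_trans (hB x Dx) (ltW BM).
Qed.

Lemma mF : measurable_fun setT F.
Proof. by apply: nondecreasing_measurable => // x y; exact: F_nd. Qed.

Lemma mq : measurable_fun setT q.
Proof. by apply: measurable_funB => //; exact: mF. Qed.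

Lemma F01 x : `|F x| <= 1.
Proof. by rewrite ger0_norm ?F_ge0 ?F_le1. Qed.

Lemma q01 x : `|q x| <= 1.
Proof.
by rewrite /Defs.qf ger0_norm ?subr_ge0 ?F_le1 // lerBlDr lerDl F_ge0.
Qed.

Section itv.
Variables s t : R.
Hypothesis st : s <= t.
Let D := `[s, t[%classic : set R.
Let mD : measurable D. Proof. exact: measurable_itv. Qed.
Let LD : (L D < +oo)%E.
Proof. by have := lebesgue_measure_itv `[s, t[; rewrite /= => ->; case: ifP => _; rewrite ?ltry. Qed.

Lemma int_bnd (h : R -> R) (B : R) : measurable_fun setT h ->
  (forall x, D x -> `|h x| <= B) -> L.-integrable D (EFin \o h).
Proof.
move=> mh hB; apply: measurable_bounded_integrable => //.
  exact: measurable_funS mh.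
exact: bnd hB.
Qed.

Lemma int_f : L.-integrable D (EFin \o f).
Proof.
apply/integrableP; split; first by apply/measurable_EFinP; exact: measurable_funS mf.
under eq_integral do rewrite /= ger0_norm ?f_ge0 //.
by rewrite int_itv // ltry.
Qed.

Lemma int_hf (h : R -> R) (B : R) : measurable_fun setT h ->
  (forall x, D x -> `|h x| <= B) -> L.-integrable D (EFin \o (fun x => h x * f x)).
Proof.
move=> mh hB.
have := @integrableMr _ _ _ L D mD _ _ (measurable_funS measurableT (@subsetT _ D) mh) (bnd hB) int_f.
apply: eq_integrable; first exact: measurable_itv.
by move=> x _ /=; rewrite EFinM.
Qed.

Lemma LDE : fine (L D) = t - s.
Proof.
have E : L D = (if (s < t)%R then (t - s)%:E else 0%:E)%E.
  by apply: etrans (lebesgue_measure_itv `[s, t[) _; rewrite /= lte_fin -EFinB.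
rewrite E; case: ltP => // ts /=.
have -> : t = s by apply/eqP; rewrite eq_le st ts.
by rewrite subrr.
Qed.

Lemma ID2 k : \int[L]_(v in D) (k * f v) = k * (F t - F s).
Proof.
rewrite RintegralZl //; last exact: int_f.
by rewrite /Rintegral int_itv.
Qed.

Lemma ID1 : \int[L]_(v in D) (v * f v - q v) = Defs.Rev P s - Defs.Rev P t.
Proof.
have i1 : L.-integrable D (EFin \o (fun v => (v - s) * f v)).
  apply: (@int_hf (fun v => v - s) (t - s)).
    exact: measurable_funB.
  move=> x; rewrite /D /= in_itv /= => /andP[sx xt].
  by rewrite ger0_norm ?subr_ge0 // lerD2r ltW.
have i2 : L.-integrable D (EFin \o (fun v => s * f v)).
  by apply: (@int_hf (fun v => s) `|s|) => // x _.
have i3 : L.-integrable D (EFin \o q).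
  by apply: (@int_bnd q 1); [exact: mq | move=> x _; exact: q01].
have i4 : L.-integrable D (EFin \o (fun u => F t - F u)).
  apply: (@int_bnd _ 1); first by apply: measurable_funB => //; exact: mF.
  move=> x; rewrite /D /= in_itv /= => /andP[_ xt].
  rewrite ger0_norm; last by rewrite subr_ge0 F_nd // ltW.
  by have := F_le1 t; have := F_ge0 x; lra.
have e1 : \int[L]_(v in D) ((v - s) * f v) = \int[L]_(u in D) (F t - F u).
  by rewrite /Rintegral key.
have e2 : \int[L]_(u in D) (F t - F u) - \int[L]_(u in D) q u = (F t - 1) * (t - s).
  rewrite -RintegralB //.
  rewrite (@eq_Rintegral _ _ _ L D (fun _ => F t - 1)); last first.
    by move=> x _; rewrite /Defs.qf; ring.
  by rewrite Rintegral_cst // LDE.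
have -> : \int[L]_(v in D) (v * f v - q v) =
   \int[L]_(v in D) ((v - s) * f v) + \int[L]_(v in D) (s * f v) - \int[L]_(u in D) q u.
  have i5 : L.-integrable D (EFin \o (fun v => v * f v)).
    apply: (@int_hf (fun v => v) (`|s| + `|t|)) => // x.
    rewrite /D /= in_itv /= => /andP[sx xt].
    exact: absx_bnd.
  rewrite RintegralB // -RintegralD //; congr (_ - _).
  by apply: eq_Rintegral => x _; ring.
rewrite e1 ID2 addrAC e2 /Defs.Rev /Defs.qf; ring.
Qed.

Lemma int_vfq : L.-integrable D (EFin \o (fun v => v * f v - q v)).
Proof.
have i5 : L.-integrable D (EFin \o (fun v => v * f v)).
  apply: (@int_hf (fun v => v) (`|s| + `|t|)) => // x.
  rewrite /D /= in_itv /= => /andP[sx xt].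
  exact: absx_bnd.
have i3 : L.-integrable D (EFin \o q).
  by apply: (@int_bnd q 1); [exact: mq | move=> x _; exact: q01].
have := @integrableB _ _ _ L D mD _ _ i5 i3.
apply: eq_integrable; first exact: measurable_itv.
by move=> x _ /=; rewrite EFinB.
Qed.

Lemma int_kf k : L.-integrable D (EFin \o (fun v => k * f v)).
Proof. by apply: (@int_hf (fun v => k) `|k|) => // x _. Qed.

Lemma main_le k : (forall v, s <= v < t -> v * f v - q v <= k * f v) ->
  Defs.Rev P s - Defs.Rev P t <= k * (F t - F s).
Proof.
move=> H; rewrite -ID1 -ID2; apply: le_Rintegral; try exact: measurable_itv; try exact: int_vfq; try exact: int_kf.
by move=> x; rewrite /D /= in_itv /=; exact: H.
Qed.

Lemma main_ge k : (forall v, s <= v < t -> k * f v <= v * f v - q v) ->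
  k * (F t - F s) <= Defs.Rev P s - Defs.Rev P t.
Proof.
move=> H; rewrite -ID1 -ID2; apply: le_Rintegral; try exact: measurable_itv; try exact: int_vfq; try exact: int_kf.
by move=> x; rewrite /D /= in_itv /=; exact: H.
Qed.
End itv.

Lemma Lpos (s t : R) : s < t -> (0 < L `[s, t[%classic)%E.
Proof.
move=> st; have E : L `[s, t[%classic = (if (s < t)%R then (t - s)%:E else 0%:E)%E.
  by apply: etrans (lebesgue_measure_itv `[s, t[) _; rewrite /= lte_fin -EFinB.
by rewrite E st lte_fin subr_gt0.
Qed.

Lemma POS (s t : R) : s < t -> (forall v, s <= v < t -> 0 < f v) -> F s < F t.
Proof.
move=> st fp; rewrite lt_neqAle F_nd ?ltW // andbT; apply/negP => /eqP E.
have I0 : (\int[L]_(x in `[s, t[) `|(f x)%:E|)%E = 0%E.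
  transitivity (\int[L]_(x in `[s, t[) (f x)%:E)%E.
    by apply: eq_integral => x _; rewrite gee0_abs // lee_fin f_ge0.
  by rewrite int_itv ?ltW // E subrr.
have := (@ae_eq_integral_abs _ _ _ L _ (measurable_itv `[s, t[) _ _).1 I0.
case.
  by apply/measurable_EFinP; exact: measurable_funS mf.
move=> N [mN N0 sub].
have : (L `[s, t[%classic <= L N)%E.
  apply: le_measure; rewrite ?inE //.
  move=> x xI; apply: sub => /= /(_ xI) [] E0.
  by move: xI; rewrite /= in_itv /= => /fp; rewrite E0 ltxx.
by rewrite N0 leNgt Lpos.
Qed.

Lemma int_null (s t : R) : s <= t -> (forall v, s < v < t -> f v = 0) -> F t = F s.
Proof.
move=> st f0; apply/eqP; rewrite -subr_eq0; apply/eqP.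
suff : (F t - F s)%:E = 0%:E by case.
rewrite -int_itv //.
rewrite (@ge0_negligible_integral _ _ _ L `[s, t[ [set s] (fun x => (f x)%:E)) //.
- apply: integral0_eq => x [] /=; rewrite in_itv /= => /andP[sx xt] xs.
  rewrite f0 // xt andbT lt_neqAle sx andbT; apply/eqP => E; exact: xs (esym E).
- by apply/measurable_EFinP; exact: (measurable_funS measurableT (@subsetT _ _) mf).
- by move=> x _; rewrite lee_fin f_ge0.
- exact: lebesgue_measure_set1.
Qed.


Lemma Rev0 : Defs.Rev P 0 = 0.
Proof. by rewrite /Defs.Rev mul0r. Qed.

Lemma q_ge0 x : 0 <= q x.
Proof. by rewrite /Defs.qf subr_ge0 F_le1. Qed.

Lemma q_le1 x : q x <= 1.
Proof. by rewrite /Defs.qf lerBlDr lerDl F_ge0. Qed.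

Section reg.
Variable I : set R.
Hypotheses (hI : is_interval I) (hI0 : I `<=` [set x | 0 <= x])
  (fpos : forall x, I x -> 0 < f x) (f0 : forall x, ~ I x -> f x = 0)
  (vmono : forall x y, I x -> I y -> x <= y ->
     virtual_value P f x <= virtual_value P f y).

Lemma S1 p : 0 < q p -> exists v, p <= v /\ I v.
Proof.
move=> qp; apply: contrapT => nE.
suff : q p = 0 by move=> E; rewrite E ltxx in qp.
suff : (q p)%:E = 0%:E by case.
rewrite -PgeE; case: hd => _ _ ->; last exact: mge.
apply: integral0_eq => x /= px; rewrite f0 // => Ix; apply: nE; by exists x.
Qed.

Lemma S2 p : 0 < F p -> exists v, v < p /\ I v.
Proof.
move=> Fp; apply: contrapT => nE.
suff : F p = 0 by move=> E; rewrite E ltxx in Fp.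
suff : (F p)%:E = 0%:E by case.
rewrite -PltE; case: hd => _ _ ->; last exact: mlt.
apply: integral0_eq => x /= px; rewrite f0 // => Ix; apply: nE; by exists x.
Qed.

Lemma Sint p : 0 < F p -> 0 < q p -> I p.
Proof.
move=> /S2 [v [vp Iv]] /S1 [w [pw Iw]].
have H : v <= p <= w by rewrite (ltW vp) pw.
exact: (hI Iv Iw H).
Qed.

Lemma F0 : F 0 = 0.
Proof.
apply/eqP; rewrite eq_le F_ge0 andbT leNgt; apply/negP => /S2 [v [v0 Iv]].
by have := hI0 Iv; rewrite /= leNgt v0.
Qed.

Lemma phiE v : I v -> virtual_value P f v * f v = v * f v - q v.
Proof.
move=> Iv; rewrite /virtual_value mulrBl -/(Defs.qf P v) mulfVK //.
exact/lt0r_neq0/fpos.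
Qed.

Lemma Hlem x y : I x -> I y -> x <= y ->
  Defs.Rev P y * F x <= Defs.Rev P x * F y.
Proof.
move=> Ix Iy xy.
set k := virtual_value P f x.
have h1 : k * (F y - F x) <= Defs.Rev P x - Defs.Rev P y.
  apply: main_ge => // v /andP[xv vy].
  have Iv : I v by apply: (hI Ix Iy); rewrite xv ltW.
  by rewrite -phiE // ler_wpM2r ?f_ge0 // vmono.
have x0 : 0 <= x := hI0 Ix.
have h2 : Defs.Rev P 0 - Defs.Rev P x <= k * (F x - F 0).
  apply: main_le => // v /andP[v0 vx].
  case: (pselect (I v)) => Iv.
    by rewrite -phiE // ler_wpM2r ?f_ge0 // vmono // ltW.
  by rewrite f0 // !mulr0 sub0r oppr_le0 q_ge0.
rewrite Rev0 F0 subr0 sub0r in h2.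
rewrite -subr_ge0.
have -> : Defs.Rev P x * F y - Defs.Rev P y * F x =
  (Defs.Rev P x - Defs.Rev P y - k * (F y - F x)) * F x +
  (Defs.Rev P x + k * F x) * (F y - F x) by ring.
apply: addr_ge0; apply: mulr_ge0.
- by rewrite subr_ge0.
- exact: F_ge0.
- by rewrite -lerBlDl sub0r.
- by rewrite subr_ge0 F_nd.
Qed.

Lemma pos_point : exists p, 0 < p /\ 0 < q p.
Proof.
apply: contrapT => nE.
have F1 p : 0 < p -> F p = 1.
  move=> p0; have : ~ (0 < q p) by move=> qp; apply: nE; exists p.
  move/negP; rewrite -leNgt => qp.
  have : q p = 0 by apply/eqP; rewrite eq_le qp q_ge0.
  by rewrite /Defs.qf => /eqP; rewrite subr_eq0 => /eqP.
case: (pselect (exists y, I y /\ 0 < y)) => [[y [Iy y0]]|nY].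
  have : 0 < F y by rewrite F1.
  case/S2 => x [xy Ix].
  have x0 : 0 <= x := hI0 Ix.
  set m := (x + y) / 2.
  have m0 : 0 < m by rewrite /m; lra.
  have my : m < y by rewrite /m; lra.
  have xm : x <= m by rewrite /m; lra.
  have : F m < F y.
    apply: POS => // v /andP[mv vy]; apply: fpos.
    by apply: (hI Ix Iy); rewrite (le_trans xm mv) ltW.
  by rewrite !F1 ?ltxx.
have := @int_null 0 1 ler01.
rewrite F0 F1 ?ltr01 //.
move=> H; have : (1 : R) = 0.
  apply: H => v /andP[v0 _]; apply: f0 => Iv; apply: nY; by exists v.
by move/eqP; rewrite oner_eq0.
Qed.

Lemma final (popt eps delta pt : R) :
  is_opt_price P popt ->
  0 < eps -> eps <= 1 / 10 -> 0 < delta -> delta <= 1 ->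
  (eps <= q popt -> pt = popt) ->
  (q popt < eps -> q pt = eps) ->
  (1 - eps) * Defs.Rev P popt <= Defs.Rev P pt /\
  ((1 - delta / 2)%:E <=
     P [set s : R | (delta * s / 8 <= pt <= 4 * s / (delta * eps))%R])%E.
Proof.
move=> hopt e0 e1 d0 d1 Hc1 Hc2.
have Ro0 : 0 <= Defs.Rev P popt by rewrite -Rev0; exact: hopt.
have partA : (1 - eps) * Defs.Rev P popt <= Defs.Rev P pt.
  case: (lerP eps (q popt)) => he.
    rewrite (Hc1 he) mulrBl mul1r lerBlDr lerDl; exact: mulr_ge0 (ltW e0) Ro0.
  have qt := Hc2 he.
  have Ft : F pt = 1 - eps by move: qt; rewrite /Defs.qf => <-; ring.
  have Ipt : I pt by apply: Sint; [rewrite Ft; lra | rewrite qt].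
  have pt0 : 0 <= pt := hI0 Ipt.
  have Rt0 : 0 <= Defs.Rev P pt by rewrite /Defs.Rev mulr_ge0 // q_ge0.
  case: (lerP (q popt) 0) => qo.
    rewrite /Defs.Rev; have -> : q popt = 0 by apply/eqP; rewrite eq_le qo q_ge0.
    by rewrite mulr0 mulr0 -/(Defs.Rev P pt).
  have Fo : F popt = 1 - q popt by rewrite /Defs.qf; ring.
  have Ipo : I popt by apply: Sint => //; rewrite Fo; lra.
  have tle : pt <= popt.
    rewrite leNgt; apply/negP => ot; have := F_nd (ltW ot).
    by rewrite Ft Fo; lra.
  have := Hlem Ipt Ipo tle; rewrite Ft => H.
  rewrite mulrC; apply: (le_trans H).
  by rewrite ler_piMr // F_le1.
split => //.
have [pt_pos qt_ge] : 0 < pt /\ eps <= q pt.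
  case: (lerP eps (q popt)) => he.
    rewrite (Hc1 he); split => //.
    rewrite ltNge; apply/negP => po.
    case: pos_point => p [p0 qp].
    have h1 : Defs.Rev P p <= Defs.Rev P popt := hopt p.
    have h2 : Defs.Rev P popt <= 0 by rewrite /Defs.Rev mulr_le0_ge0 // q_ge0.
    have h3 : 0 < Defs.Rev P p by rewrite /Defs.Rev mulr_gt0.
    lra.
  have qt := Hc2 he.
  have Ft : F pt = 1 - eps by move: qt; rewrite /Defs.qf => <-; ring.
  split; last by rewrite qt.
  have : 0 < F pt by rewrite Ft; lra.
  case/S2 => v [vp Iv]; have := hI0 Iv; rewrite /= => v0.
  exact: le_lt_trans v0 vp.
set z := delta * eps * pt / 4.
set w := 8 * pt / delta.
have z0 : 0 <= z by rewrite /z !mulr_ge0 // ?ltW // invr_ge0.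
have zpt : z <= pt.
  have de : delta * eps <= 1.
    by rewrite -[leRHS]mulr1 ler_pM // ?ltW //; lra.
  have -> : z = pt * (delta * eps / 4) by rewrite /z; ring.
  rewrite ler_piMr ?ltW //.
  set de' := delta * eps in de *; lra.
have Fz : F z <= delta / 4.
  case: (lerP (F z) 0) => Fz0; first lra.
  have Fzp : F z <= F pt := F_nd zpt.
  have qz : 0 < q z.
    by apply: (lt_le_trans e0); apply: (le_trans qt_ge); rewrite /Defs.qf lerB.
  have Iz : I z := Sint Fz0 qz.
  have Ipt : I pt := Sint (lt_le_trans Fz0 Fzp) (lt_le_trans e0 qt_ge).
  have H := Hlem Iz Ipt zpt.
  have a : Defs.Rev P z * F pt <= z.
    apply: (@le_trans _ _ (Defs.Rev P z)).
      by rewrite ler_piMr ?F_le1 // /Defs.Rev mulr_ge0 // q_ge0.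
    by rewrite /Defs.Rev ler_piMr // q_le1.
  have b : Defs.Rev P pt * F z = pt * (q pt * F z) by rewrite /Defs.Rev mulrA.
  have c : pt * (eps * F z) <= pt * (q pt * F z).
    by rewrite ler_pM2l // ler_pM2r.
  have d : pt * (eps * F z) <= pt * (eps * (delta / 4)).
    apply: (le_trans c); rewrite -b; apply: (le_trans H); apply: (le_trans a).
    by rewrite /z le_eqVlt; apply/orP; left; apply/eqP; ring.
  by move: d; rewrite ler_pM2l // ler_pM2l.
have qw : q w <= delta / 4.
  have k1 : (1 - eps) * Defs.Rev P w <= pt.
    apply: (@le_trans _ _ ((1 - eps) * Defs.Rev P popt)).
      by apply: ler_wpM2l; [lra | exact: hopt].
    apply: (le_trans partA).
    by rewrite /Defs.Rev ler_piMr ?q_le1 // ltW.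
  have k2 : (1 - eps) * Defs.Rev P w = pt * ((1 - eps) * 8 / delta * q w).
    by rewrite /Defs.Rev /w; ring.
  rewrite k2 -[leRHS]mulr1 ler_pM2l // in k1.
  have k4 : (1 - eps) * 8 * q w <= delta.
    have -> : (1 - eps) * 8 * q w = ((1 - eps) * 8 / delta * q w) * delta.
      by field; exact: lt0r_neq0.
    by rewrite -[leRHS]mul1r ler_pM2r.
  have k5 : 8 * q w - 8 * (eps * q w) <= delta.
    by have -> : 8 * q w - 8 * (eps * q w) = (1 - eps) * 8 * q w by ring.
  have k6 : eps * q w <= 1 / 10 * q w by apply: ler_wpM2r => //; exact: q_ge0.
  have := q_ge0 w.
  set u := q w in k5 k6 *; set eu := eps * u in k5 k6.
  lra.
have ptw : pt <= w.
  have -> : w = pt * (8 / delta) by rewrite /w; ring.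
  rewrite ler_peMr ?ltW // ltr_pdivlMr // mul1r; lra.
have zw : z <= w := le_trans zpt ptw.
apply: (@le_trans _ _ (F w - F z)%:E).
  by rewrite lee_fin; move: qw Fz; rewrite /Defs.qf; lra.
rewrite -PitvE //.
have mG : measurable [set s : R | (delta * s / 8 <= pt <= 4 * s / (delta * eps))%R].
  have m1 : measurable_fun setT (fun s : R => delta * s / 8 <= pt).
    apply: measurable_fun_ler => //.
    apply: (measurable_funM (f := fun s => delta * s) (g := cst (8^-1))) => //.
    exact: (measurable_funM (f := cst delta) (g := id)).
  have m2 : measurable_fun setT (fun s : R => pt <= 4 * s / (delta * eps)).
    apply: measurable_fun_ler => //.
    apply: (measurable_funM (f := fun s : R => 4 * s) (g := cst ((delta * eps)^-1))) => //.
    exact: (measurable_funM (f := cst (4 : R)) (g := id)).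
  have := measurable_and m1 m2 measurableT (Y := [set true]) Logic.I.
  rewrite setTI; congr measurable.
apply: le_measure; rewrite ?inE //.
  by rewrite -itvE; exact: measurable_itv.
move=> s /= /andP[zs sw]; apply/andP; split.
  have -> : pt = delta * w / 8 by rewrite /w; field; exact: lt0r_neq0.
  by rewrite ler_pM2r // ler_pM2l // ltW.
have -> : pt = 4 * z / (delta * eps).
  by rewrite /z; field; apply/andP; split; exact: lt0r_neq0.
by rewrite ler_pM2r ?invr_gt0 ?mulr_gt0 // ler_pM2l.
Qed.
End reg.
End S.

Unset Implicit Arguments. Set Strict Implicit.

Theorem lemma4p3 (R : realType) (P : probability R R) (f : R -> R)
    (popt eps delta ptilde : R) :
  is_density P f -> regular P f -> is_opt_price P popt ->
  0 < eps -> eps <= 1 / 10 -> 0 < delta -> delta <= 1 ->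
  (eps <= qf P popt -> ptilde = popt) ->
  (qf P popt < eps -> qf P ptilde = eps) ->
  (1 - eps) * Rev P popt <= Rev P ptilde /\
  ((1 - delta / 2)%:E <=
     P [set s : R | (delta * s / 8 <= ptilde <= 4 * s / (delta * eps))%R])%E.
Proof.
move=> hd [I [hI hI0 fpos f0 vmono]].
exact: (final hd hI hI0 fpos f0 vmono).
Qed.
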